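(* In the Call-by-Value probabilistic $\lambda$-calculus (as defined in the context), $\Rrightarrow_E$ is asymptotically complete for $\Rightarrow$: for every multi-distribution $\mathbf m$, if $\mathbf m\Rightarrow^{\mathrm{obs}_{\mathrm{Nnf}}}\mathbf r$ then $\mathbf m\Rrightarrow_E^{\mathrm{obs}_{\mathrm{Nnf}}}\mathbf s$ for some $\mathbf s$ with $\mathbf r\le\mathbf s$.
   Context: Terms $\Lambda_\oplus$: $M::=x\mid\lambda x.M\mid MM\mid M\oplus M$; values $V::=x\mid\lambda x.M$. Contexts $C::=[\,]\mid MC\mid CM\mid\lambda x.C\mid C\oplus M\mid M\oplus C$; weak contexts $W::=[\,]\mid WM\mid MW$. A multi-distribution is a finite multiset $[p_iM_i]_{i\in I}$ with $p_i\in(0,1]$, $\sum_ip_i\le1$; $+$ is multiset union, $q\cdot[p_iM_i]_i=[(qp_i)M_i]_i$, $[M]:=[1M]$. $C[(\lambda x.M)V]\to_{\beta_v}[C[M\{V/x\}]]$; $W[M\oplus N]\to_\oplus[\tfrac12W[M],\tfrac12W[N]]$; $\to:=\to_{\beta_v}\cup\to_\oplus$; surface reduction $\to_s$ is $\to_\oplus$ together with the closure of $\beta_v$ under weak contexts. $M$ is $\to$-normal (surface-normal) if no $\mathbf m$ with $M\to\mathbf m$ ($M\to_s\mathbf m$); $\mathrm{Nnf}$ is the set of $\to$-normal terms. Lifting $\Rightarrow_r$ of $r$: least relation with $[M]\Rightarrow_r[M]$; $[M]\Rightarrow_r\mathbf m$ if $M\,r\,\mathbf m$; $[p_iM_i]_{i\in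 I}\Rightarrow_r\sum_ip_i\cdot\mathbf m_i$ if $[M_i]\Rightarrow_r\mathbf m_i$ for all $i$. Full lifting $\Rrightarrow_r$: same but the first rule $[M]\Rrightarrow_r[M]$ only when $M$ is $\to$-normal. $\Rightarrow$ is the lifting of $\to$. Let $\rightsquigarrow_U$ be the unbiased iteration of weak $\beta_v$-reduction on $\Lambda_\oplus$: if $M\to_wM'$ (closure of $\beta_v$ under weak contexts) then $M\rightsquigarrow_UM'$; if $M$ is $\to_w$-normal: $\lambda x.P\rightsquigarrow_U\lambda x.P'$, $PQ\rightsquigarrow_UP'Q$, $PQ\rightsquigarrow_UPQ'$, $P\oplus Q\rightsquigarrow_UP'\oplus Q$, $P\oplus Q\rightsquigarrow_UP\oplus Q'$ whenever $P\rightsquigarrow_UP'$, resp. $Q\rightsquigarrow_UQ'$. $\rightsquigarrow_E$: if $M$ is not surface-normal and $M\to_s\mathbf m$ then $M\rightsquigarrow_E\mathbf m$; if $M$ is surface-normal and $M\rightsquigarrow_UM'$ then $M\rightsquigarrow_E[M']$; $\Rrightarrow_E$ is its full lifting. $\mathrm{obs}_{\mathrm{Nnf}}([p_iM_i]_{i\in I})$ is the subdistribution $\mu$ on $\mathrm{Nnf}$ with $\mu(N)=\sum_{i:\,M_i=N}p_i$, subdistributions ordered pointwise. For a relation $R$ on multi-distributions, $\mathbf m\,R^{\mathrm{obs}_{\mathrm{Nnf}}}\,\mathbf r$ means there is a maximal $R$-sequence $(\mathbf m_n)_n$ from $\mathbf m$ (infinite, or finite ending in an $R$-normal element and then continued constantly)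 with $\sup_n\mathrm{obs}_{\mathrm{Nnf}}(\mathbf m_n)=\mathbf r$. *)

(* Defs.v *)
From Stdlib Require Import Reals List Arith.
From Stdlib Require Import ClassicalDescription.
Import ListNotations.
Open Scope R_scope.

(** Terms of Lambda_(+), with de Bruijn indices (Var n, Lam binds index 0). *)
Inductive term : Type :=
| Var : nat -> term
| Lam : term -> term
| App : term -> term -> term
| Plus : term -> term -> term.

Definition term_eq_dec : forall M N : term, {M = N} + {M <> N}.
Proof. decide equality; apply Nat.eq_dec. Defined.

Definition is_value (V : term) : Prop :=
  match V with Var _ | Lam _ => True | _ => False end.

Fixpoint lift_rec (n k : nat) (t : term) : term :=
  match t with
  | Var i => if (k <=? i)%nat then Var (n + i) else Var i
  | Lam M => Lam (lift_rec n (S k) M)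
  | App M N => App (lift_rec n k M) (lift_rec n k N)
  | Plus M N => Plus (lift_rec n k M) (lift_rec n k N)
  end.

Fixpoint subst_rec (u t : term) (k : nat) : term :=
  match t with
  | Var i => if (i <? k)%nat then Var i
             else if (i =? k)%nat then lift_rec k 0 u else Var (pred i)
  | Lam M => Lam (subst_rec u M (S k))
  | App M N => App (subst_rec u M k) (subst_rec u N k)
  | Plus M N => Plus (subst_rec u M k) (subst_rec u N k)
  end.

Definition subst0 (V M : term) : term := subst_rec V M 0.

(** Multi-distributions: finite lists (multisets up to permutation) of weighted terms. *)
Definition mdist := list (R * term).

Definition weight (m : mdist) : R := fold_right (fun pM acc => fst pM + acc) 0 m.

Definition is_mdist (m : mdist) : Prop :=
  Forall (fun pM => 0 < fst pM <= 1) m /\ weight m <= 1.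

Definition scale (q : R) (m : mdist) : mdist :=
  map (fun pM => (q * fst pM, snd pM)) m.

Definition dirac (M : term) : mdist := [(1, M)].

Inductive beta_full : term -> term -> Prop :=
| bf_beta : forall M V, is_value V -> beta_full (App (Lam M) V) (subst0 V M)
| bf_appl : forall M M' N, beta_full M M' -> beta_full (App M N) (App M' N)
| bf_appr : forall M N N', beta_full N N' -> beta_full (App M N) (App M N')
| bf_lam  : forall M M', beta_full M M' -> beta_full (Lam M) (Lam M')
| bf_plusl : forall M M' N, beta_full M M' -> beta_full (Plus M N) (Plus M' N)
| bf_plusr : forall M N N', beta_full N N' -> beta_full (Plus M N) (Plus M N').

Inductive beta_weak : term -> term -> Prop :=
| bw_beta : forall M V, is_value V -> beta_weak (App (Lam M) V) (subst0 V M)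
| bw_appl : forall M M' N, beta_weak M M' -> beta_weak (App M N) (App M' N)
| bw_appr : forall M N N', beta_weak N N' -> beta_weak (App M N) (App M N').

(** oplus_split M M1 M2 : M = W[A (+) B], M1 = W[A], M2 = W[B] *)
Inductive oplus_split : term -> term -> term -> Prop :=
| os_base : forall A B, oplus_split (Plus A B) A B
| os_appl : forall M M1 M2 N, oplus_split M M1 M2 ->
    oplus_split (App M N) (App M1 N) (App M2 N)
| os_appr : forall M N N1 N2, oplus_split N N1 N2 ->
    oplus_split (App M N) (App M N1) (App M N2).

Definition oplus_step (M : term) (m : mdist) : Prop :=
  exists M1 M2, oplus_split M M1 M2 /\ m = [(1/2, M1); (1/2, M2)].

Definition step (M : term) (m : mdist) : Prop :=
  (exists N, beta_full M N /\ m = dirac N) \/ oplus_step M m.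

Definition surface_step (M : term) (m : mdist) : Prop :=
  (exists N, beta_weak M N /\ m = dirac N) \/ oplus_step M m.

Definition normal (M : term) : Prop := forall m, ~ step M m.
Definition surface_normal (M : term) : Prop := forall m, ~ surface_step M m.
Definition weak_normal (M : term) : Prop := forall N, ~ beta_weak M N.

Inductive U_step : term -> term -> Prop :=
| U_weak : forall M M', beta_weak M M' -> U_step M M'
| U_lam : forall P P', weak_normal (Lam P) -> U_step P P' -> U_step (Lam P) (Lam P')
| U_appl : forall P P' Q, weak_normal (App P Q) -> U_step P P' ->
    U_step (App P Q) (App P' Q)
| U_appr : forall P Q Q', weak_normal (App P Q) -> U_step Q Q' ->
    U_step (App P Q) (App P Q')
| U_plusl : forall P P' Q, weak_normal (Plus P Q) -> U_step P P' ->
    U_step (Plus P Q) (Plus P' Q)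
| U_plusr : forall P Q Q', weak_normal (Plus P Q) -> U_step Q Q' ->
    U_step (Plus P Q) (Plus P Q').

Definition E_step (M : term) (m : mdist) : Prop :=
  (~ surface_normal M /\ surface_step M m) \/
  (surface_normal M /\ exists M', U_step M M' /\ m = dirac M').

(** Lifting of r : term -> mdist -> Prop to multi-distributions.
    [full = false] : the lifting =>_r ([M] =>_r [M] always);
    [full = true]  : the full lifting ([M] => [M] only for ->-normal M). *)
Inductive lift_single (full : bool) (r : term -> mdist -> Prop) : term -> mdist -> Prop :=
| ls_refl : forall M, (full = true -> normal M) -> lift_single full r M (dirac M)
| ls_step : forall M m, r M m -> lift_single full r M m.

Inductive lift_gen (full : bool) (r : term -> mdist -> Prop) : mdist -> mdist -> Prop :=
| lg_nil : lift_gen full r [] []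
| lg_cons : forall p M m l l', lift_single full r M m -> lift_gen full r l l' ->
    lift_gen full r ((p, M) :: l) (scale p m ++ l').

Definition lift (r : term -> mdist -> Prop) := lift_gen false r.
Definition full_lift (r : term -> mdist -> Prop) := lift_gen true r.

Definition Rstep : mdist -> mdist -> Prop := lift step.
Definition RstepE : mdist -> mdist -> Prop := full_lift E_step.

(** Subdistributions on Nnf, as functions term -> R (0 outside Nnf) *)
Definition subdist := term -> R.

Definition obs_Nnf (m : mdist) : subdist := fun N =>
  if excluded_middle_informative (normal N) then
    fold_right (fun pM acc => (if term_eq_dec (snd pM) N then fst pM else 0) + acc) 0 m
  else 0.

Definition maximal_seq (Rel : mdist -> mdist -> Prop) (ms : nat -> mdist) : Prop :=
  forall n, Rel (ms n) (ms (S n)) \/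
            ((forall x, ~ Rel (ms n) x) /\ ms (S n) = ms n).

Definition sup_obs (ms : nat -> mdist) (r : subdist) : Prop :=
  forall N, is_lub (fun x => exists n, x = obs_Nnf (ms n) N) (r N).

Definition obs_rel (Rel : mdist -> mdist -> Prop) (m : mdist) (r : subdist) : Prop :=
  exists ms : nat -> mdist, ms 0%nat = m /\ maximal_seq Rel ms /\ sup_obs ms r.

Definition subdist_le (r s : subdist) : Prop := forall N, r N <= s N.

(* Main.v *)
Require Import Defs.
From Stdlib Require Import Reals List Lia Lra Arith ClassicalDescription.
Import ListNotations.
Local Open Scope nat_scope.

Ltac cmp1 := match goal with
  | |- context [?a <=? ?b] => destruct (Nat.leb_spec a b)
  | |- context [?a <? ?b] => destruct (Nat.ltb_spec a b)
  | |- context [?a =? ?b] => destruct (Nat.eqb_spec a b)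
  end.
Ltac cmps := repeat (cbn [lift_rec subst_rec]; try cmp1); cbn [lift_rec subst_rec].

Lemma L1 : forall U p n i k, i <= k -> k <= i + n ->
  lift_rec p k (lift_rec n i U) = lift_rec (p + n) i U.
Proof.
  induction U; intros; cbn [lift_rec subst_rec].
  - cmps; f_equal; lia.
  - f_equal. apply IHU; lia.
  - f_equal; auto.
  - f_equal; auto.
Qed.

Lemma L2 : forall U p n i k, i <= k ->
  lift_rec p i (lift_rec n k U) = lift_rec n (p + k) (lift_rec p i U).
Proof.
  induction U; intros; cbn [lift_rec subst_rec].
  - cmps; f_equal; lia.
  - f_equal. replace (S (p + k)) with (p + S k) by lia. apply IHU; lia.
  - f_equal; auto.
  - f_equal; auto.
Qed.

Lemma L3 : forall U V n k p,
  lift_rec n (k + p) (subst_rec V U p) = subst_rec (lift_rec n k V) (lift_rec n (S (k + p)) U) p.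
Proof.
  induction U; intros; cbn [lift_rec subst_rec].
  - cmps; try (f_equal; lia); try lia.
    subst. rewrite (L2 V p n0 0 k) by lia. replace (p + k) with (k + p) by lia; reflexivity.
  - f_equal. replace (S (k + p)) with (k + S p) by lia. rewrite IHU. f_equal.
  - f_equal; auto.
  - f_equal; auto.
Qed.

Lemma L4 : forall U V n i k, i <= k -> k <= i + n ->
  subst_rec V (lift_rec (S n) i U) k = lift_rec n i U.
Proof.
  induction U; intros; cbn [lift_rec subst_rec].
  - cmps; try (f_equal; lia); try lia.
  - f_equal. apply IHU; lia.
  - f_equal; auto.
  - f_equal; auto.
Qed.

Lemma L5 : forall W V j k p,
  subst_rec V (lift_rec j p W) (j + k + p) = lift_rec j p (subst_rec V W (k + p)).
Proof.
  induction W; intros; cbn [lift_rec subst_rec].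
  - cmps; try (f_equal; lia); try lia.
    subst. rewrite L1 by lia. f_equal; lia.
  - f_equal. replace (S (j + k + p)) with (j + k + S p) by lia.
    replace (S (k + p)) with (k + S p) by lia. apply IHW.
  - f_equal; auto.
  - f_equal; auto.
Qed.

Lemma SL : forall T V W j k,
  subst_rec V (subst_rec W T j) (j + k) =
  subst_rec (subst_rec V W k) (subst_rec V T (S (j + k))) j.
Proof.
  induction T; intros; cbn [lift_rec subst_rec].
  - cmps; try (f_equal; lia); try lia.
    + subst. pose proof (L5 W V j k 0) as H5. rewrite !Nat.add_0_r in H5. exact H5.
    + subst. symmetry. apply L4; lia.

  - f_equal. replace (S (j + k)) with (S j + k) by lia. rewrite IHT. f_equal.
  - f_equal; auto.
  - f_equal; auto.
Qed.
Fixpoint occ (k : nat) (t : term) : nat :=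
  match t with
  | Var i => if i =? k then 1 else 0
  | Lam M => occ (S k) M
  | App M N => occ k M + occ k N
  | Plus M N => occ k M + occ k N
  end.

Inductive par : nat -> term -> term -> Prop :=
| par_var : forall i, par 0 (Var i) (Var i)
| par_lam : forall n P P', par n P P' -> par n (Lam P) (Lam P')
| par_app : forall n1 n2 A A' B B', par n1 A A' -> par n2 B B' ->
    par (n1 + n2) (App A B) (App A' B')
| par_plus : forall n1 n2 A A' B B', par n1 A A' -> par n2 B B' ->
    par (n1 + n2) (Plus A B) (Plus A' B')
| par_beta : forall n1 n2 P P' V V', is_value V -> par n1 P P' -> par n2 V V' ->
    par (S (n1 + occ 0 P' * n2)) (App (Lam P) V) (subst0 V' P').

Lemma occ_lift_low : forall T j i k, k < i -> occ k (lift_rec j i T) = occ k T.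
Proof.
  induction T; intros; cbn [lift_rec occ].
  - cmps; cbn [occ]; cmps; lia.
  - apply IHT; lia.
  - rewrite IHT1, IHT2 by lia; auto.
  - rewrite IHT1, IHT2 by lia; auto.
Qed.

Lemma occ_lift_high : forall U j i k, i <= k -> occ (j + k) (lift_rec j i U) = occ k U.
Proof.
  induction U; intros; cbn [lift_rec occ].
  - cmps; cbn [occ]; cmps; lia.
  - replace (S (j + k)) with (j + S k) by lia. apply IHU; lia.
  - rewrite IHU1, IHU2 by lia; auto.
  - rewrite IHU1, IHU2 by lia; auto.
Qed.

Lemma occ_lift_gap : forall U n i j, i <= j -> j < i + n -> occ j (lift_rec n i U) = 0.
Proof.
  induction U; intros; cbn [lift_rec occ].
  - cmps; cbn [occ]; cmps; lia.
  - apply IHU; lia.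
  - rewrite IHU1, IHU2 by lia; auto.
  - rewrite IHU1, IHU2 by lia; auto.
Qed.

Lemma occ_subst_low : forall T U k j, j < k -> occ j (subst_rec U T k) = occ j T.
Proof.
  induction T; intros; cbn [subst_rec occ].
  - cmps; cbn [occ]; cmps; try lia.
    apply occ_lift_gap; lia.
  - apply IHT; lia.
  - rewrite IHT1, IHT2 by lia; auto.
  - rewrite IHT1, IHT2 by lia; auto.
Qed.

Lemma occ_subst_high : forall T U j k,
  occ (j + k) (subst_rec U T j) = occ (S (j + k)) T + occ j T * occ k U.
Proof.
  induction T; intros; cbn [subst_rec occ].
  - cmps; cbn [occ]; cmps; try lia.
    subst. rewrite occ_lift_high by lia. lia.
  - replace (S (j + k)) with (S j + k) by lia. rewrite IHT. f_equal.
  - rewrite IHT1, IHT2. lia.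
  - rewrite IHT1, IHT2. lia.
Qed.

Lemma value_lift : forall V j i, is_value V -> is_value (lift_rec j i V).
Proof. destruct V; simpl; intros; try tauto. destruct (i <=? n); simpl; auto. Qed.

Lemma value_subst : forall V W k, is_value V -> is_value W -> is_value (subst_rec V W k).
Proof.
  intros V W k HV HW. destruct W; simpl in *; try tauto.
  destruct (n <? k); simpl; auto. destruct (n =? k); simpl; auto. apply value_lift; auto.
Qed.

Lemma par_value : forall n V V', par n V V' -> is_value V -> is_value V'.
Proof. intros n V V' H; inversion H; subst; simpl; tauto. Qed.

Lemma par_lift : forall n V V', par n V V' -> forall j i, par n (lift_rec j i V) (lift_rec j i V').
Proof.
  induction 1; intros; cbn [lift_rec].
  - destruct (i0 <=? i); constructor.
  - constructor; auto.
  - constructor; auto.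
  - constructor; auto.
  - pose proof (L3 P' V' j i 0) as E. rewrite !Nat.add_0_r in E. unfold subst0. rewrite E.
    rewrite <- (occ_lift_low P' j (S i) 0) by lia.
    apply par_beta; auto. apply value_lift; auto.
Qed.

Lemma par_subst : forall n1 P P', par n1 P P' -> forall n2 V V' k, is_value V -> par n2 V V' ->
  exists n, n <= n1 + occ k P' * n2 /\ par n (subst_rec V P k) (subst_rec V' P' k).
Proof.
  induction 1; intros n0 W W' k HW HWW; cbn [subst_rec occ].
  - destruct (Nat.ltb_spec i k).
    + exists 0. split. { destruct (Nat.eqb_spec i k); lia. } constructor.
    + destruct (Nat.eqb_spec i k).
      * subst. exists n0. split; [lia|]. apply par_lift; auto.
      * exists 0. split; [lia|]. constructor.
  - destruct (IHpar n0 W W' (S k) HW HWW) as [m [Hm Hp]].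
    exists m; split; [lia|]. constructor; auto.
  - destruct (IHpar1 n0 W W' k HW HWW) as [m1 [Hm1 Hp1]].
    destruct (IHpar2 n0 W W' k HW HWW) as [m2 [Hm2 Hp2]].
    exists (m1 + m2); split; [nia|]. constructor; auto.
  - destruct (IHpar1 n0 W W' k HW HWW) as [m1 [Hm1 Hp1]].
    destruct (IHpar2 n0 W W' k HW HWW) as [m2 [Hm2 Hp2]].
    exists (m1 + m2); split; [nia|]. constructor; auto.
  - destruct (IHpar1 n0 W W' (S k) HW HWW) as [m1 [Hm1 Hp1]].
    destruct (IHpar2 n0 W W' k HW HWW) as [m2 [Hm2 Hp2]].
    exists (S (m1 + occ 0 (subst_rec W' P' (S k)) * m2)). split.
    + rewrite occ_subst_low by lia. unfold subst0.
      pose proof (occ_subst_high P' V' 0 k) as E. simpl in E. rewrite E.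
      assert (occ 0 P' * m2 <= occ 0 P' * (n2 + occ k V' * n0)) by (apply Nat.mul_le_mono_l; lia).
      nia.
    + unfold subst0. pose proof (SL P' W' V' 0 k) as E. simpl in E. rewrite E.
      apply par_beta; auto. apply value_subst; auto.
Qed.

Lemma par_refl : forall t, exists n, par n t t.
Proof.
  induction t.
  - exists 0; constructor.
  - destruct IHt as [n H]; exists n; constructor; auto.
  - destruct IHt1 as [n1 H1]; destruct IHt2 as [n2 H2]; eexists; constructor; eauto.
  - destruct IHt1 as [n1 H1]; destruct IHt2 as [n2 H2]; eexists; constructor; eauto.
Qed.

Lemma beta_par : forall M N, beta_full M N -> exists n, par n M N.
Proof.
  induction 1.
  - destruct (par_refl M) as [n1 H1]; destruct (par_refl V) as [n2 H2].
    eexists; apply par_beta; eauto.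
  - destruct IHbeta_full as [n H1]; destruct (par_refl N) as [n2 H2]; eexists; constructor; eauto.
  - destruct IHbeta_full as [n H1]; destruct (par_refl M) as [n2 H2]; eexists; constructor; eauto.
  - destruct IHbeta_full as [n H1]; eexists; constructor; eauto.
  - destruct IHbeta_full as [n H1]; destruct (par_refl N) as [n2 H2]; eexists; constructor; eauto.
  - destruct IHbeta_full as [n H1]; destruct (par_refl M) as [n2 H2]; eexists; constructor; eauto.
Qed.

Definition isvb (t : term) : bool := match t with Var _ | Lam _ => true | _ => false end.
Definition islam (t : term) : bool := match t with Lam _ => true | _ => false end.
Definition rootred (A B : term) : bool := islam A && isvb B.
Fixpoint wred (t : term) : bool :=
  match t with App A B => wred A || wred B || rootred A B | _ => false end.
Fixpoint sred (t : term) : bool :=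
  match t with Plus _ _ => true | App A B => sred A || sred B || rootred A B | _ => false end.
Fixpoint bred (t : term) : bool :=
  match t with
  | Var _ => false
  | Lam P => bred P
  | App A B => bred A || bred B || rootred A B
  | Plus A B => bred A || bred B
  end.
Fixpoint owred (t : term) : bool :=
  match t with Plus _ _ => true | App A B => owred A || owred B | _ => false end.
Definition normalb (t : term) : bool := negb (bred t) && negb (owred t).

Definition contract (A B : term) : term :=
  match A with Lam Q => subst0 B Q | _ => App A B end.

Fixpoint canb (t : term) : term :=
  match t with
  | Var i => Var i
  | Lam P => Lam (canb P)
  | App A B => if wred A then App (canb A) B else if wred B then App A (canb B)
               else if rootred A B then contract A B
               else if bred A then App (canb A) B else App A (canb B)
  | Plus A B => if bred A then Plus (canb A) B else Plus A (canb B)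
  end.

Definition mapl (g : term -> term) (l : mdist) : mdist :=
  map (fun pX => (fst pX, g (snd pX))) l.

Fixpoint scan (t : term) : mdist :=
  match t with
  | Plus A B => [((1/2)%R, A); ((1/2)%R, B)]
  | App A B => if sred A then mapl (fun X => App X B) (scan A)
               else if sred B then mapl (fun X => App A X) (scan B)
               else if rootred A B then [(1%R, contract A B)] else []
  | _ => []
  end.

Lemma isvb_value : forall t, isvb t = true <-> is_value t.
Proof. destruct t; simpl; split; intros; auto; try discriminate; tauto. Qed.

Lemma rootred_true : forall A B, rootred A B = true -> exists Q, A = Lam Q /\ is_value B.
Proof.
  intros A B H. unfold rootred in H. apply andb_prop in H as [H1 H2].
  destruct A; try discriminate. exists A; split; auto. apply isvb_value; auto.
Qed.

Lemma value_rootred : forall Q B, is_value B -> rootred (Lam Q) B = true.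
Proof. intros. unfold rootred. simpl. apply isvb_value; auto. Qed.

Lemma value_nw : forall V, is_value V -> wred V = false /\ sred V = false /\ owred V = false.
Proof. destruct V; simpl; tauto. Qed.

Lemma wred_sred : forall t, wred t = true -> sred t = true.
Proof.
  induction t; simpl; intros; try discriminate; auto.
  destruct (wred t1), (wred t2), (sred t1), (sred t2), (rootred t1 t2); simpl in *; intuition congruence.
Qed.

Lemma owred_sred : forall t, owred t = true -> sred t = true.
Proof.
  induction t; simpl; intros; try discriminate; auto.
  destruct (owred t1), (owred t2), (sred t1), (sred t2), (rootred t1 t2); simpl in *; intuition congruence.
Qed.

Lemma wred_bred : forall t, wred t = true -> bred t = true.
Proof.
  induction t; simpl; intros; try discriminate; auto.
  destruct (wred t1), (wred t2), (bred t1), (bred t2), (rootred t1 t2); simpl in *; intuition congruence.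
Qed.

Lemma sred_not_normal : forall t, sred t = true -> normalb t = false.
Proof.
  induction t; unfold normalb in *; simpl; intros; try discriminate; auto;
  try (rewrite Bool.andb_false_r; reflexivity).
  destruct (bred t1), (bred t2), (owred t1), (owred t2), (sred t1), (sred t2), (rootred t1 t2);
    simpl in *; intuition congruence.
Qed.

Lemma sred_wred_false : forall t, sred t = false -> wred t = false.
Proof. intros t H. destruct (wred t) eqn:E; auto. rewrite (wred_sred t E) in H; discriminate. Qed.

Lemma NW : forall n A A', par n A A' -> wred A = false ->
  wred A' = false /\ islam A' = islam A /\ isvb A' = isvb A.
Proof.
  induction 1; simpl; intros Hw; auto.
  - destruct (wred A) eqn:E1, (wred B) eqn:E2; simpl in Hw; try discriminate.
    destruct (IHpar1 eq_refl) as [a1 [a2 a3]]. destruct (IHpar2 eq_refl) as [b1 [b2 b3]].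
    rewrite a1, b1. unfold rootred. rewrite a2, b3. simpl. auto.
  - rewrite value_rootred in Hw by auto. rewrite !Bool.orb_true_r in Hw. discriminate.
Qed.

Lemma NS : forall n A A', par n A A' -> sred A = false -> sred A' = false.
Proof.
  induction 1; simpl; intros Hs; auto.
  - destruct (sred A) eqn:E1, (sred B) eqn:E2; simpl in Hs; try discriminate.
    rewrite IHpar1, IHpar2 by auto. simpl.
    destruct (NW _ _ _ H (sred_wred_false _ E1)) as [_ [a2 _]].
    destruct (NW _ _ _ H0 (sred_wred_false _ E2)) as [_ [_ b3]].
    unfold rootred. rewrite a2, b3. auto.
  - rewrite value_rootred in Hs by auto. rewrite !Bool.orb_true_r in Hs. discriminate.
Qed.

Lemma par_bnormal : forall n A A', par n A A' -> bred A = false -> A' = A.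
Proof.
  induction 1; simpl; intros Hb; auto.
  - f_equal; auto.
  - destruct (bred A), (bred B); simpl in *; try discriminate. f_equal; auto.
  - destruct (bred A), (bred B); simpl in *; try discriminate. f_equal; auto.
  - rewrite value_rootred in Hb by auto. rewrite !Bool.orb_true_r in Hb. discriminate.
Qed.

Lemma par_lam_inv : forall n Q X, par n (Lam Q) X -> exists Q', X = Lam Q' /\ par n Q Q'.
Proof. intros n Q X H. inversion H; subst. eauto. Qed.

Definition RP (a b : R * term) : Prop := fst a = fst b /\ exists j, par j (snd a) (snd b).

Lemma Forall2_mapl : forall g h l l', Forall2 RP l l' ->
  (forall X X' j, par j X X' -> exists j', par j' (g X) (h X')) ->
  Forall2 RP (mapl g l) (mapl h l').
Proof.
  intros g h l l' H Hg. induction H; simpl; constructor; auto.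
  destruct H as [H1 [j H2]]. split; simpl; auto. eapply Hg; eauto.
Qed.

Lemma PS : forall n M M', par n M M' -> sred M = true ->
  (exists X n', scan M = [(1%R, X)] /\ par n' X M' /\ n' < n) \/
  (sred M' = true /\ Forall2 RP (scan M) (scan M')).
Proof.
  induction 1; intros Hs; cbn [sred scan] in *; try discriminate.
  - destruct (sred A) eqn:EA.
    + destruct (IHpar1 eq_refl) as [[X [n' [E1 [E2 E3]]]] | [E1 E2]].
      * left. exists (App X B), (n' + n2). rewrite E1. split; [reflexivity|].
        split; [constructor; auto | lia].
      * right. rewrite E1. split; [reflexivity|].
        apply Forall2_mapl; auto. intros. eexists; constructor; eauto.
    + rewrite (NS _ _ _ H EA). destruct (sred B) eqn:EB.
      * destruct (IHpar2 eq_refl) as [[X [n' [E1 [E2 E3]]]] | [E1 E2]].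
        -- left. exists (App A X), (n1 + n'). rewrite E1. split; [reflexivity|].
           split; [constructor; auto | lia].
        -- right. rewrite E1. split; [reflexivity|].
           apply Forall2_mapl; auto. intros. eexists; constructor; eauto.
      * rewrite (NS _ _ _ H0 EB). simpl in Hs. rewrite Hs.
        destruct (rootred_true _ _ Hs) as [Q [-> HV]].
        destruct (par_lam_inv _ _ _ H) as [Q' [-> HQ]].
        assert (HV' : is_value B') by (eapply par_value; eauto).
        right. rewrite value_rootred by auto. split; [reflexivity|].
        constructor; [|constructor]. split; [reflexivity|]. simpl.
        destruct (par_subst _ _ _ HQ n2 B B' 0 HV H0) as [j [_ Hj]]. eauto.
  - right. split; [reflexivity|]. repeat constructor; simpl; eauto.
  - left. destruct (value_nw V H) as [_ [HsV _]]. rewrite HsV.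
    rewrite value_rootred by auto. exists (subst0 V P).
    destruct (par_subst _ _ _ H0 n2 V V' 0 H H1) as [j [Hj1 Hj2]].
    exists j. split; [reflexivity|]. split; [exact Hj2|lia].
Qed.

Lemma CB : forall n M M', par n M M' -> bred M = true ->
  (exists n', par n' (canb M) M' /\ n' < n) \/
  (bred M' = true /\ (wred M = true -> wred M' = true) /\ exists j, par j (canb M) (canb M')).
Proof.
  induction 1; intros Hb; cbn [bred wred canb] in *; try discriminate.
  - destruct (IHpar Hb) as [[n' [E1 E2]] | [E1 [E2 [j E3]]]].
    + left. exists n'. split; [constructor; auto|lia].
    + right. split; auto. split; [intros; discriminate|]. exists j; constructor; auto.
  - destruct (wred A) eqn:EA.
    + destruct (IHpar1 (wred_bred _ EA)) as [[n' [E1 E2]] | [E1 [E2 [j E3]]]].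
      * left. exists (n' + n2). split; [constructor; auto|lia].
      * right. rewrite (E2 eq_refl). simpl. rewrite E1. split; auto. split; auto.
        eexists; constructor; eauto.
    + destruct (NW _ _ _ H EA) as [WA' [LA' VA']]. rewrite WA'. simpl.
      destruct (wred B) eqn:EB.
      * destruct (IHpar2 (wred_bred _ EB)) as [[n' [E1 E2]] | [E1 [E2 [j E3]]]].
        -- left. exists (n1 + n'). split; [constructor; auto|lia].
        -- right. rewrite (E2 eq_refl). simpl. rewrite E1, Bool.orb_true_r. simpl.
           split; auto. split; auto. eexists; constructor; eauto.
      * destruct (NW _ _ _ H0 EB) as [WB' [LB' VB']]. rewrite WB'. simpl.
        destruct (rootred A B) eqn:ER.
        -- destruct (rootred_true _ _ ER) as [Q [-> HV]].
           destruct (par_lam_inv _ _ _ H) as [Q' [-> HQ]].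
           assert (HV' : is_value B') by (eapply par_value; eauto).
           right. rewrite value_rootred by auto. rewrite !Bool.orb_true_r.
           split; auto. split; auto. simpl.
           destruct (par_subst _ _ _ HQ n2 B B' 0 HV H0) as [j [_ Hj]]. eauto.
        -- assert (ER' : rootred A' B' = false) by (unfold rootred in *; rewrite LA', VB'; auto).
           rewrite ER'. simpl in Hb.
           destruct (bred A) eqn:EbA.
           ++ destruct (IHpar1 eq_refl) as [[n' [E1 E2]] | [E1 [E2 [j E3]]]].
              ** left. exists (n' + n2). split; [constructor; auto|lia].
              ** right. rewrite E1. simpl. split; auto. split; [intros; discriminate|].
                 eexists; constructor; eauto.
           ++ pose proof (par_bnormal _ _ _ H EbA) as ->. rewrite EbA. simpl in *.
              try rewrite Bool.orb_false_r in Hb.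
              destruct (IHpar2 Hb) as [[n' [E1 E2]] | [E1 [E2 [j E3]]]].
              ** left. exists (n1 + n'). split; [constructor; auto|lia].
              ** right. rewrite E1. simpl. split; [repeat rewrite ?Bool.orb_true_r, ?Bool.orb_true_l; simpl; repeat rewrite ?Bool.orb_true_r; try reflexivity; match goal with |- ?g => idtac g end|].
                 split; [intros; discriminate|]. eexists; constructor; eauto.
  - destruct (bred A) eqn:EbA.
    + destruct (IHpar1 eq_refl) as [[n' [E1 E2]] | [E1 [E2 [j E3]]]].
      * left. exists (n' + n2). split; [constructor; auto|lia].
      * right. rewrite E1. simpl. split; auto. split; [intros; discriminate|].
        eexists; constructor; eauto.
    + pose proof (par_bnormal _ _ _ H EbA) as ->. rewrite EbA. simpl in *.
      destruct (IHpar2 Hb) as [[n' [E1 E2]] | [E1 [E2 [j E3]]]].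
      * left. exists (n1 + n'). split; [constructor; auto|lia].
      * right. rewrite E1. simpl. split; [repeat rewrite ?Bool.orb_true_r, ?Bool.orb_true_l; simpl; repeat rewrite ?Bool.orb_true_r; try reflexivity; match goal with |- ?g => idtac g end|].
        split; [intros; discriminate|]. eexists; constructor; eauto.
  - left. destruct (value_nw V H) as [HwV _]. rewrite HwV.
    rewrite value_rootred by auto. simpl.
    destruct (par_subst _ _ _ H0 n2 V V' 0 H H1) as [j [Hj1 Hj2]].
    exists j. split; [exact Hj2|lia].
Qed.

Inductive diam3 : mdist -> mdist -> mdist -> Prop :=
| d3nil : diam3 [] [] []
| d3cons : forall p X X1 X2 l l1 l2, oplus_split X X1 X2 -> diam3 l l1 l2 ->
    diam3 ((p, X) :: l) ((p, X1) :: l1) ((p, X2) :: l2).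

Lemma diam3_mapl : forall g, (forall a b c, oplus_split a b c -> oplus_split (g a) (g b) (g c)) ->
  forall l l1 l2, diam3 l l1 l2 -> diam3 (mapl g l) (mapl g l1) (mapl g l2).
Proof. intros g Hg l l1 l2 H. induction H; simpl; constructor; auto. Qed.

Lemma diam3_right : forall Y Y1 Y2, oplus_split Y Y1 Y2 -> forall l : mdist,
  diam3 (mapl (fun Z => App Z Y) l) (mapl (fun Z => App Z Y1) l) (mapl (fun Z => App Z Y2) l).
Proof. intros Y Y1 Y2 H l. induction l; simpl; constructor; auto. constructor; auto. Qed.

Lemma DO : forall M M1 M2, oplus_split M M1 M2 -> sred M = true /\
  (scan M = [((1/2)%R, M1); ((1/2)%R, M2)] \/
   (sred M1 = true /\ sred M2 = true /\ diam3 (scan M) (scan M1) (scan M2))).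
Proof.
  induction 1; cbn [sred scan].
  - split; auto.
  - destruct IHoplus_split as [HS [E | [S1 [S2 D]]]]; rewrite HS; simpl; split; auto.
    + left. rewrite E. reflexivity.
    + right. rewrite S1, S2. simpl. split; auto. split; auto.
      apply diam3_mapl; auto. intros; constructor; auto.
  - destruct IHoplus_split as [HS [E | [S1 [S2 D]]]].
    + rewrite HS. rewrite !Bool.orb_true_r. split; auto.
      destruct (sred M) eqn:EM.
      * right. split; auto. split; auto. apply diam3_right; auto.
      * left. rewrite E. reflexivity.
    + rewrite HS, S1, S2. rewrite !Bool.orb_true_r. split; auto. right. split; auto. split; auto.
      destruct (sred M) eqn:EM.
      * apply diam3_right; auto.
      * apply diam3_mapl; auto. intros; constructor; auto.
Qed.

Lemma beta_full_bred : forall t N, beta_full t N -> bred t = true.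
Proof.
  induction 1; simpl; auto.
  - rewrite value_rootred by auto. apply Bool.orb_true_r.
  - rewrite IHbeta_full; auto.
  - rewrite IHbeta_full, Bool.orb_true_r; auto.
  - rewrite IHbeta_full; auto.
  - rewrite IHbeta_full, Bool.orb_true_r; auto.
Qed.

Lemma bred_beta : forall t, bred t = true -> exists N, beta_full t N.
Proof.
  induction t; simpl; intros H; try discriminate.
  - destruct (IHt H) as [N HN]. eexists; constructor; eauto.
  - destruct (bred t1) eqn:E1.
    + destruct (IHt1 eq_refl) as [N HN]. eexists; constructor; eauto.
    + destruct (bred t2) eqn:E2.
      * destruct (IHt2 eq_refl) as [N HN]. eexists; apply bf_appr; eauto.
      * simpl in H. destruct (rootred_true _ _ H) as [Q [-> HV]]. eexists; constructor; eauto.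
  - destruct (bred t1) eqn:E1.
    + destruct (IHt1 eq_refl) as [N HN]. eexists; constructor; eauto.
    + simpl in H. destruct (IHt2 H) as [N HN]. eexists; apply bf_plusr; eauto.
Qed.

Lemma split_owred : forall t a b, oplus_split t a b -> owred t = true.
Proof. induction 1; simpl; auto. rewrite IHoplus_split; auto. rewrite IHoplus_split, Bool.orb_true_r; auto. Qed.

Lemma owred_split : forall t, owred t = true -> exists a b, oplus_split t a b.
Proof.
  induction t; simpl; intros H; try discriminate.
  - destruct (owred t1) eqn:E1.
    + destruct (IHt1 eq_refl) as [a [b HN]]. do 2 eexists; constructor; eauto.
    + simpl in H. destruct (IHt2 H) as [a [b HN]]. do 2 eexists; apply os_appr; eauto.
  - do 2 eexists; constructor.
Qed.

Lemma normal_iff : forall t, normal t <-> normalb t = true.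
Proof.
  intros t. unfold normal, normalb, step, oplus_step. split.
  - intros H. destruct (bred t) eqn:E1.
    + destruct (bred_beta _ E1) as [N HN]. exfalso. apply (H (dirac N)). left; eauto.
    + destruct (owred t) eqn:E2; auto.
      destruct (owred_split _ E2) as [a [b HN]]. exfalso.
      apply (H [((1/2)%R, a); ((1/2)%R, b)]). right; eauto.
  - intros H m [[N [HN _]] | [a [b [HN _]]]].
    + rewrite (beta_full_bred _ _ HN) in H. discriminate.
    + rewrite (split_owred _ _ _ HN) in H. rewrite Bool.andb_false_r in H. discriminate.
Qed.

Lemma beta_weak_wred : forall t N, beta_weak t N -> wred t = true.
Proof.
  induction 1; simpl; auto.
  - rewrite value_rootred by auto. apply Bool.orb_true_r.
  - rewrite IHbeta_weak; auto.
  - rewrite IHbeta_weak, Bool.orb_true_r; auto.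
Qed.

Lemma SS : forall t, sred t = true -> surface_step t (scan t).
Proof.
  unfold surface_step, oplus_step.
  induction t; intros H; cbn [sred scan] in *; try discriminate.
  - destruct (sred t1) eqn:E1.
    + destruct (IHt1 eq_refl) as [[N [HN E]] | [a [b [HN E]]]]; rewrite E.
      * left. exists (App N t2). split; [constructor; auto | reflexivity].
      * right. do 2 eexists. split; [constructor; eauto | reflexivity].
    + destruct (sred t2) eqn:E2.
      * destruct (IHt2 eq_refl) as [[N [HN E]] | [a [b [HN E]]]]; rewrite E.
        -- left. exists (App t1 N). split; [apply bw_appr; auto | reflexivity].
        -- right. do 2 eexists. split; [apply os_appr; eauto | reflexivity].
      * simpl in H. rewrite H. destruct (rootred_true _ _ H) as [Q [-> HV]].
        left. eexists. split; [constructor; eauto | reflexivity].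
  - right. do 2 eexists. split; [constructor | reflexivity].
Qed.

Lemma WS : forall t, wred t = true -> beta_weak t (canb t).
Proof.
  induction t; intros H; cbn [wred canb] in *; try discriminate.
  destruct (wred t1) eqn:E1.
  - constructor; auto.
  - destruct (wred t2) eqn:E2.
    + apply bw_appr; auto.
    + simpl in H. rewrite H. destruct (rootred_true _ _ H) as [Q [-> HV]]. constructor; auto.
Qed.

Lemma weak_normal_of : forall t, wred t = false -> weak_normal t.
Proof. intros t H N HN. rewrite (beta_weak_wred _ _ HN) in H. discriminate. Qed.

Lemma US : forall t, bred t = true -> U_step t (canb t).
Proof.
  induction t; intros H; cbn [bred canb] in *; try discriminate.
  - apply U_lam; auto. apply weak_normal_of; reflexivity.
  - destruct (wred t1) eqn:E1.
    + apply U_weak. constructor. apply WS; auto.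
    + destruct (wred t2) eqn:E2.
      * apply U_weak. apply bw_appr. apply WS; auto.
      * destruct (rootred t1 t2) eqn:ER.
        -- apply U_weak. destruct (rootred_true _ _ ER) as [Q [-> HV]]. constructor; auto.
        -- assert (weak_normal (App t1 t2)) by (apply weak_normal_of; simpl; rewrite E1, E2, ER; auto).
           destruct (bred t1) eqn:B1.
           ++ apply U_appl; auto.
           ++ simpl in H. rewrite Bool.orb_false_r in H. apply U_appr; auto.
  - assert (weak_normal (Plus t1 t2)) by (apply weak_normal_of; reflexivity).
    destruct (bred t1) eqn:B1.
    + apply U_plusl; auto.
    + simpl in H. apply U_plusr; auto.
Qed.

Lemma surface_normal_of : forall t, sred t = false -> surface_normal t.
Proof.
  intros t H m [[N [HN _]] | [a [b [HN _]]]].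
  - rewrite (wred_sred _ (beta_weak_wred _ _ HN)) in H. discriminate.
  - rewrite (owred_sred _ (split_owred _ _ _ HN)) in H. discriminate.
Qed.

Definition Ecan (t : term) : mdist := if sred t then scan t else [(1%R, canb t)].

Lemma E_Ecan : forall t, normalb t = false -> E_step t (Ecan t).
Proof.
  intros t H. unfold E_step, Ecan. destruct (sred t) eqn:ES.
  - left. split; [|apply SS; auto]. intros Hn. apply (Hn _ (SS _ ES)).
  - right. split; [apply surface_normal_of; auto|]. exists (canb t). split; [|reflexivity].
    apply US. unfold normalb in H. destruct (bred t) eqn:EB; auto.
    destruct (owred t) eqn:EO; [rewrite (owred_sred _ EO) in ES; discriminate|]. discriminate.
Qed.

Definition Elift (l : mdist) : mdist :=
  flat_map (fun pX => scale (fst pX) (if normalb (snd pX) then dirac (snd pX) else Ecan (snd pX))) l.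

Lemma RstepE_Elift : forall l, RstepE l (Elift l).
Proof.
  induction l as [|[p X] l IH]; simpl.
  - constructor.
  - constructor; auto. destruct (normalb X) eqn:E.
    + apply ls_refl. intros _. apply normal_iff; auto.
    + apply ls_step. apply E_Ecan; auto.
Qed.

Local Open Scope R_scope.

Definition sumw (g : term -> R) (l : mdist) : R :=
  fold_right (fun pX acc => fst pX * g (snd pX) + acc) 0 l.

Fixpoint f (k : nat) (X N : term) : R :=
  match k with
  | O => if normalb X then (if term_eq_dec X N then 1 else 0) else 0
  | S k => if normalb X then f k X N else sumw (fun Y => f k Y N) (Ecan X)
  end.

Definition nonneg (l : mdist) : Prop := Forall (fun pX => 0 <= fst pX) l.

Lemma sumw_app : forall g l1 l2, sumw g (l1 ++ l2) = sumw g l1 + sumw g l2.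
Proof. intros g l1 l2. induction l1; simpl; [ring|]. rewrite IHl1; ring. Qed.

Lemma sumw_scale : forall g p l, sumw g (scale p l) = p * sumw g l.
Proof. intros g p l. induction l; simpl; [ring|]. rewrite IHl; ring. Qed.

Lemma sumw_mapl : forall g h l, sumw g (mapl h l) = sumw (fun Y => g (h Y)) l.
Proof. intros g h l. induction l; simpl; auto. rewrite IHl; auto. Qed.

Lemma sumw_mono : forall g h l, nonneg l -> (forall Y, g Y <= h Y) -> sumw g l <= sumw h l.
Proof.
  intros g h l Hl H. induction Hl as [|x l Hx Hl IH]; simpl; [lra|].
  pose proof (H (snd x)). apply Rplus_le_compat; auto. apply Rmult_le_compat_l; auto.
Qed.

Lemma sumw_nonneg : forall g l, nonneg l -> (forall Y, 0 <= g Y) -> 0 <= sumw g l.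
Proof.
  intros g l Hl H. induction Hl as [|x l Hx Hl IH]; simpl; [lra|].
  pose proof (H (snd x)) as Hg. pose proof (Rmult_le_pos _ _ Hx Hg). lra.
Qed.

Lemma nonneg_mapl : forall h l, nonneg l -> nonneg (mapl h l).
Proof. intros h l Hl. induction Hl; simpl; constructor; auto. Qed.

Lemma nonneg_scan : forall t, nonneg (scan t).
Proof.
  induction t; cbn [scan]; try constructor.
  - destruct (sred t1); [apply nonneg_mapl; auto|].
    destruct (sred t2); [apply nonneg_mapl; auto|].
    destruct (rootred t1 t2); repeat constructor; simpl; lra.
  - simpl; lra.
  - constructor; [simpl; lra | constructor].
Qed.

Lemma weight_scan : forall t, sumw (fun _ => 1) (scan t) <= 1.
Proof.
  induction t; cbn [scan]; simpl; try lra.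
  destruct (sred t1); [rewrite sumw_mapl; auto|].
  destruct (sred t2); [rewrite sumw_mapl; auto|].
  destruct (rootred t1 t2); simpl; lra.
Qed.

Lemma nonneg_Ecan : forall t, nonneg (Ecan t).
Proof. intros t. unfold Ecan. destruct (sred t); [apply nonneg_scan|]. repeat constructor. simpl; lra. Qed.

Lemma weight_Ecan : forall t, sumw (fun _ => 1) (Ecan t) <= 1.
Proof. intros t. unfold Ecan. destruct (sred t); [apply weight_scan|]. simpl; lra. Qed.

Lemma f_bounds : forall k X N, 0 <= f k X N <= 1.
Proof.
  induction k; intros; simpl.
  - destruct (normalb X); [destruct (term_eq_dec X N)|]; lra.
  - destruct (normalb X); auto. split.
    + apply sumw_nonneg; [apply nonneg_Ecan|]. intros; apply IHk.
    + eapply Rle_trans; [|apply (weight_Ecan X)]. apply sumw_mono; [apply nonneg_Ecan|].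
      intros; apply IHk.
Qed.

Lemma f_mono_S : forall k X N, f k X N <= f (S k) X N.
Proof.
  induction k; intros.
  - simpl. destruct (normalb X) eqn:E; [lra|].
    apply sumw_nonneg; [apply nonneg_Ecan|]. intros Y; exact (proj1 (f_bounds 0 Y N)).
  - change (f (S k) X N <= (if normalb X then f (S k) X N else sumw (fun Y => f (S k) Y N) (Ecan X))).
    simpl. destruct (normalb X) eqn:E; [lra|].
    apply sumw_mono; [apply nonneg_Ecan|]. intros; apply IHk.
Qed.

Lemma f_mono : forall k k' X N, (k <= k')%nat -> f k X N <= f k' X N.
Proof.
  intros k k' X N H. induction H; [lra|]. eapply Rle_trans; [apply IHle|apply f_mono_S].
Qed.

Lemma sumw_f_mono : forall l k k' N, nonneg l -> (k <= k')%nat ->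
  sumw (fun Y => f k Y N) l <= sumw (fun Y => f k' Y N) l.
Proof. intros. apply sumw_mono; auto. intros; apply f_mono; auto. Qed.

Lemma sumw_Elift : forall k N l,
  sumw (fun Y => f k Y N) (Elift l) = sumw (fun Y => f (S k) Y N) l.
Proof.
  intros k N l. induction l as [|[p X] l IH]; simpl; auto.
  rewrite sumw_app, sumw_scale, IH. destruct (normalb X) eqn:E; simpl; [ring|]. reflexivity.
Qed.

Lemma obs_f0 : forall l N, obs_Nnf l N = sumw (fun Y => f 0 Y N) l.
Proof.
  intros l N. unfold obs_Nnf. destruct (excluded_middle_informative (normal N)) as [HN|HN].
  - induction l as [|[p X] l IH]; simpl; auto. rewrite IH.
    destruct (term_eq_dec X N).
    + subst. rewrite (proj1 (normal_iff N) HN). cbn [f]; ring.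
    + cbn [f]. destruct (normalb X); ring.
  - induction l as [|[p X] l IH]; simpl; auto. cbn [f] in *. rewrite <- IH.
    destruct (normalb X) eqn:E; [|ring].
    destruct (term_eq_dec X N); [|ring]. subst. exfalso. apply HN, normal_iff; auto.
Qed.

Lemma sumw_iter : forall N k j l,
  sumw (fun Y => f j Y N) (Nat.iter k Elift l) = sumw (fun Y => f (k + j) Y N) l.
Proof.
  intros N k. induction k; intros; simpl; auto.
  rewrite sumw_Elift, IHk. rewrite Nat.add_succ_r. reflexivity.
Qed.

Lemma obs_iter : forall k l N,
  obs_Nnf (Nat.iter k Elift l) N = sumw (fun Y => f k Y N) l.
Proof.
  intros k l N. rewrite obs_f0, sumw_iter, Nat.add_0_r. reflexivity.
Qed.

Lemma f_S_nn : forall k X N, normalb X = false -> f (S k) X N = sumw (fun Y => f k Y N) (Ecan X).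
Proof. intros. simpl. rewrite H. reflexivity. Qed.

Lemma f_0_nn : forall X N, normalb X = false -> f 0 X N = 0.
Proof. intros. simpl. rewrite H. reflexivity. Qed.

Lemma lift_forall2 : forall k N l l', nonneg l ->
  Forall2 (fun a b => fst a = fst b /\ exists k', f k (snd b) N <= f k' (snd a) N) l l' ->
  exists K, sumw (fun Y => f k Y N) l' <= sumw (fun Y => f K Y N) l.
Proof.
  intros k N l l' Hn H. induction H as [|[p X] [p' X'] l l' [Hp [k1 Hk1]] H IH]; simpl in *.
  - exists 0%nat. lra.
  - inversion Hn as [|? ? Hp0 Hn']; subst. simpl in Hp0.
    destruct (IH Hn') as [K1 HK1]. exists (Nat.max k1 K1).
    assert (f k1 X N <= f (Nat.max k1 K1) X N) by (apply f_mono; lia).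
    assert (sumw (fun Y => f K1 Y N) l <= sumw (fun Y => f (Nat.max k1 K1) Y N) l)
      by (apply sumw_f_mono; auto; lia).
    assert (p' * f k X' N <= p' * f (Nat.max k1 K1) X N)
      by (apply Rmult_le_compat_l; auto; lra).
    lra.
Qed.

Lemma C : forall k n M M' N, par n M M' -> exists k', f k M' N <= f k' M N.
Proof.
  intro k. induction k as [k IHk] using (well_founded_induction lt_wf).
  intro n. induction n as [n IHn] using (well_founded_induction lt_wf).
  intros M M' N Hp.
  destruct (normalb M) eqn:EN.
  - assert (HB : bred M = false) by (unfold normalb in EN; destruct (bred M); auto; discriminate).
    rewrite (par_bnormal _ _ _ Hp HB). exists k. lra.
  - destruct (sred M) eqn:ES.
    + destruct (PS _ _ _ Hp ES) as [[X [n' [E1 [E2 E3]]]] | [E1 E2]].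
      * destruct (IHn n' E3 X M' N E2) as [k' Hk]. exists (S k').
        rewrite f_S_nn by auto. unfold Ecan. rewrite ES, E1. simpl. lra.
      * destruct k as [|k0].
        -- exists 0%nat. rewrite f_0_nn by (apply sred_not_normal; auto).
           apply f_bounds.
        -- rewrite f_S_nn by (apply sred_not_normal; auto).
           unfold Ecan at 1. rewrite E1.
           assert (HF : Forall2 (fun a b => fst a = fst b /\ exists k', f k0 (snd b) N <= f k' (snd a) N)
                         (scan M) (scan M')).
           { eapply Forall2_impl; [|exact E2]. intros a b [Hab [j Hj]]. split; auto.
             eapply IHk; [lia|exact Hj]. }
           destruct (lift_forall2 _ _ _ _ (nonneg_scan M) HF) as [K HK].
           exists (S K). rewrite f_S_nn by auto. unfold Ecan. rewrite ES. exact HK.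
    + assert (HB : bred M = true).
      { unfold normalb in EN. destruct (bred M); auto. destruct (owred M) eqn:EO; [|discriminate].
        rewrite (owred_sred _ EO) in ES; discriminate. }
      destruct (CB _ _ _ Hp HB) as [[n' [E1 E2]] | [E1 [_ [j E3]]]].
      * destruct (IHn n' E2 _ _ N E1) as [k' Hk]. exists (S k').
        rewrite f_S_nn by auto. unfold Ecan. rewrite ES. simpl. lra.
      * assert (NM' : normalb M' = false) by (unfold normalb; rewrite E1; reflexivity).
        destruct k as [|k0].
        -- exists 0%nat. rewrite f_0_nn by auto. apply f_bounds.
        -- rewrite f_S_nn by auto. unfold Ecan. rewrite (NS _ _ _ Hp ES).
           destruct (IHk k0 ltac:(lia) j _ _ N E3) as [k' Hk]. exists (S k').
           rewrite f_S_nn by auto. unfold Ecan. rewrite ES. simpl. lra.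
Qed.

Lemma diam_sum : forall k0 N l l1 l2, nonneg l -> diam3 l l1 l2 ->
  (forall X X1 X2, oplus_split X X1 X2 ->
     exists k', sumw (fun Y => f k0 Y N) [((1/2)%R, X1); ((1/2)%R, X2)] <= f k' X N) ->
  exists K, 1/2 * sumw (fun Y => f k0 Y N) l1 + 1/2 * sumw (fun Y => f k0 Y N) l2
            <= sumw (fun Y => f K Y N) l.
Proof.
  intros k0 N l l1 l2 Hn H Hs. induction H as [|p X X1 X2 l l1 l2 Ho H IH]; simpl in *.
  - exists 0%nat. lra.
  - inversion Hn as [|? ? Hp0 Hn']; subst. simpl in Hp0.
    destruct (IH Hn') as [K1 HK1]. destruct (Hs _ _ _ Ho) as [k1 Hk1]. simpl in Hk1.
    exists (Nat.max k1 K1).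
    assert (f k1 X N <= f (Nat.max k1 K1) X N) by (apply f_mono; lia).
    assert (sumw (fun Y => f K1 Y N) l <= sumw (fun Y => f (Nat.max k1 K1) Y N) l)
      by (apply sumw_f_mono; auto; lia).
    assert (p * (1/2 * f k0 X1 N + (1/2 * f k0 X2 N + 0)) <= p * f (Nat.max k1 K1) X N)
      by (apply Rmult_le_compat_l; auto; lra).
    lra.
Qed.

Lemma CO : forall k M M1 M2 N, oplus_split M M1 M2 ->
  exists k', sumw (fun Y => f k Y N) [((1/2)%R, M1); ((1/2)%R, M2)] <= f k' M N.
Proof.
  induction k as [|k0 IH]; intros M M1 M2 N Ho;
  destruct (DO _ _ _ Ho) as [HS [E | [S1 [S2 D]]]].
  - exists 1%nat. rewrite f_S_nn by (apply sred_not_normal; auto). unfold Ecan. rewrite HS, E. lra.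
  - exists 0%nat. unfold sumw; cbn [fold_right fst snd].
    rewrite (f_0_nn M1), (f_0_nn M2) by (apply sred_not_normal; auto).
    pose proof (f_bounds 0 M N). lra.
  - exists (S (S k0)). rewrite f_S_nn by (apply sred_not_normal; auto). unfold Ecan. rewrite HS, E. lra.
  - unfold sumw at 1; cbn [fold_right fst snd].
    rewrite (f_S_nn k0 M1), (f_S_nn k0 M2) by (apply sred_not_normal; auto). unfold Ecan. rewrite S1, S2.
    destruct (diam_sum k0 N _ _ _ (nonneg_scan M) D (fun X X1 X2 H => IH X X1 X2 N H)) as [K HK].
    exists (S K). rewrite f_S_nn by (apply sred_not_normal; auto). unfold Ecan. rewrite HS. lra.
Qed.

Lemma STEP : forall M m, step M m -> forall k N, exists k', sumw (fun Y => f k Y N) m <= f k' M N.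
Proof.
  intros M m [[N' [HN ->]] | [M1 [M2 [Ho ->]]]] k N.
  - destruct (beta_par _ _ HN) as [n Hp]. destruct (C k n M N' N Hp) as [k' Hk].
    exists k'. unfold dirac, sumw. simpl. lra.
  - apply CO; auto.
Qed.

Lemma nonneg_step : forall M m, step M m -> nonneg m.
Proof.
  intros M m [[N' [HN ->]] | [M1 [M2 [Ho ->]]]]; repeat constructor; simpl; lra.
Qed.

Lemma nonneg_scale : forall p l, 0 <= p -> nonneg l -> nonneg (scale p l).
Proof.
  intros p l Hp Hl. induction Hl; simpl; constructor; auto. simpl. apply Rmult_le_pos; auto.
Qed.

Lemma nonneg_app : forall l1 l2, nonneg l1 -> nonneg l2 -> nonneg (l1 ++ l2).
Proof. intros. apply Forall_app; auto. Qed.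

Lemma LIFT : forall a b, Rstep a b -> nonneg a -> nonneg b /\
  forall k N, exists k', sumw (fun Y => f k Y N) b <= sumw (fun Y => f k' Y N) a.
Proof.
  unfold Rstep, lift. intros a b H. induction H as [|p M m l l' Hs H IH]; intros Hn.
  - split; [constructor|]. intros; exists 0%nat; simpl; lra.
  - inversion Hn as [|? ? Hp0 Hn']; subst. simpl in Hp0.
    destruct (IH Hn') as [Hn2 IH2].
    assert (Hm : nonneg m /\ forall k N, exists k', sumw (fun Y => f k Y N) m <= f k' M N).
    { destruct Hs as [M' _ | M' m' Hst].
      - split; [repeat constructor; simpl; lra|]. intros k N. exists k. unfold dirac, sumw; simpl; lra.
      - split; [eapply nonneg_step; eauto|]. apply STEP; auto. }
    destruct Hm as [Hm1 Hm2].
    split; [apply nonneg_app; auto; apply nonneg_scale; auto|].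
    intros k N. destruct (Hm2 k N) as [k1 Hk1]. destruct (IH2 k N) as [k2 Hk2].
    exists (Nat.max k1 k2). rewrite sumw_app, sumw_scale. simpl.
    assert (f k1 M N <= f (Nat.max k1 k2) M N) by (apply f_mono; lia).
    assert (sumw (fun Y => f k2 Y N) l <= sumw (fun Y => f (Nat.max k1 k2) Y N) l)
      by (apply sumw_f_mono; auto; lia).
    assert (p * sumw (fun Y => f k Y N) m <= p * f (Nat.max k1 k2) M N)
      by (apply Rmult_le_compat_l; auto; lra).
    lra.
Qed.

Theorem mainTheorem9 :
  forall (m : mdist) (r : subdist),
    is_mdist m ->
    obs_rel Rstep m r ->
    exists s : subdist, obs_rel RstepE m s /\ subdist_le r s.
Proof.
  intros m r Hm [ms [H0 [Hmax Hsup]]].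
  assert (Hnn : nonneg m).
  { destruct Hm as [Hf _]. eapply Forall_impl; [|exact Hf]. intros [p X] [H1 H2]; simpl in *; lra. }
  set (es := fun n => Nat.iter n Elift m).
  assert (Hb : forall N, bound (fun x => exists n, x = obs_Nnf (es n) N)).
  { intros N. exists (sumw (fun _ => 1) m). intros x [n ->]. unfold es. rewrite obs_iter.
    apply sumw_mono; auto. intros; apply f_bounds. }
  assert (Hi : forall N, exists x, (fun x => exists n, x = obs_Nnf (es n) N) x).
  { intros N. exists (obs_Nnf (es 0%nat) N). exists 0%nat. reflexivity. }
  exists (fun N => proj1_sig (completeness _ (Hb N) (Hi N))).
  split.
  - exists es. split; [reflexivity|]. split.
    + intros n. left. unfold es. simpl. apply RstepE_Elift.
    + intros N. exact (proj2_sig (completeness _ (Hb N) (Hi N))).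
  - intros N. destruct (completeness _ (Hb N) (Hi N)) as [s Hs]. simpl.
    apply (proj2 (Hsup N)). intros x [n ->].
    assert (G : forall n, nonneg (ms n) /\ forall k, exists k',
               sumw (fun Y => f k Y N) (ms n) <= sumw (fun Y => f k' Y N) m).
    { induction n0 as [|n0 IH].
      - rewrite H0. split; auto. intros k; exists k; lra.
      - destruct IH as [IH1 IH2]. destruct (Hmax n0) as [HR | [_ HE]].
        + destruct (LIFT _ _ HR IH1) as [L1 L2]. split; auto. intros k.
          destruct (L2 k N) as [k1 Hk1]. destruct (IH2 k1) as [k2 Hk2]. exists k2. lra.
        + rewrite HE. split; auto. }
    destruct (G n) as [_ Hg]. destruct (Hg 0%nat) as [k' Hk'].
    rewrite obs_f0. eapply Rle_trans; [exact Hk'|]. apply (proj1 Hs). exists k'.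
    unfold es. rewrite obs_iter. reflexivity.
Qed.
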